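(* Let $H$, $G$ be real Hilbert spaces, $Z$ a nonempty closed convex subset of $H\times G$, $x_0\in H\times G$, $\{\lambda_n\}\subset(0,1]$, $\{H_n\}$ closed convex sets with $Z\subset H_n$, and let $\{x_n\}$ be generated by $x_{n+1/2}=x_n+\lambda_n(P_{H_n}(x_n)-x_n)$, $x_{n+1}=P_{H(x_0,x_n)\cap C_n}(x_0)$, where each $C_n$ is closed convex with $Z\subset C_n\subset H(x_n,x_{n+1/2})$. Let $\bar x=P_Z(x_0)$, $w=\tfrac12(x_0+\bar x)$, $r=\|w-x_0\|$ and $b_n:=4r^2-\|x_n-x_0\|^2$. Then: (i) $\|w-x_n\|\le\tfrac12\|x_0-\bar x\|$ for all $n$; (ii) $b_n\ge0$ and $\|x_n-\bar x\|^2\le b_n$ for all $n$; (iii) if $x_n\in H(x_0,x_{n-1})$ for all $n\ge1$, then $\{b_n\}$ is nonincreasing; moreover, if for some $n\ge1$ we have $x_{n-1}\neq x_n$, then $\|\bar x-x_n\|^2<\|x_0-\bar x\|^2-\|x_0-x_{n-1}\|^2$ and $b_n<b_{n-1}$.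
   Context: For $x,y\in H\times G$, $H(x,y):=\{h:\ \langle h-y\mid x-y\rangle\le 0\}$. $P_D$ is the metric projection onto a nonempty closed convex set $D$. *)

(* Defs.v *)
From HB Require Import structures.
From mathcomp Require Import all_boot all_order all_algebra.
From mathcomp Require Import all_classical all_reals all_analysis.
Set Implicit Arguments. Unset Strict Implicit. Unset Printing Implicit Defensive.
Import Order.TTheory GRing.Theory Num.Theory.
Import numFieldNormedType.Exports.
Local Open Scope classical_set_scope.
Local Open Scope ring_scope.

Definition is_hilbert_inner (R : realType) (V : completeNormedModType R)
    (ip : V -> V -> R) : Prop :=
  [/\ forall x y, ip x y = ip y x,
      forall (a : R) x y z, ip (a *: x + y) z = a * ip x z + ip y z &
      forall x, ip x x = `|x| ^+ 2].

Section Prod.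
Variables (R : realType) (H G : completeNormedModType R).
Variables (ipH : H -> H -> R) (ipG : G -> G -> R).

Definition pinner (x y : H * G) : R := ipH x.1 y.1 + ipG x.2 y.2.
Definition pnorm (x : H * G) : R := Num.sqrt (pinner x x).

Definition halfsp (x y : H * G) : set (H * G) :=
  [set h | pinner (h - y) (x - y) <= 0].

Definition pconvex (D : set (H * G)) : Prop :=
  forall x y (t : R), D x -> D y -> 0 <= t <= 1 -> D (t *: x + (1 - t) *: y).

Definition is_proj (D : set (H * G)) (x p : H * G) : Prop :=
  D p /\ forall y, D y -> pnorm (x - p) <= pnorm (x - y).

Definition metric_proj (D : set (H * G)) (x : H * G) : H * G :=
  xget x [set p | is_proj D x p].
End Prod.

(* Main.v *)
Require Import Defs.
From HB Require Import structures.
From mathcomp Require Import all_boot all_order all_algebra.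
From mathcomp Require Import all_classical all_reals all_analysis.
From mathcomp Require Import ring lra.
Import Order.TTheory GRing.Theory Num.Theory.
Import numFieldNormedType.Exports.
Local Open Scope classical_set_scope.
Local Open Scope ring_scope.
Section Gen.
Variables (R : realType) (V : lmodType R) (B : V -> V -> R).
Hypothesis BC : forall x y, B x y = B y x.
Hypothesis BL : forall a x y z, B (a *: x + y) z = a * B x z + B y z.
Lemma B0l z : B 0 z = 0.
Proof. have := BL 1 0 0 z; rewrite scaler0 addr0 mul1r => h. lra. Qed.
Lemma BDl x y z : B (x + y) z = B x z + B y z.
Proof. by have := BL 1 x y z; rewrite scale1r mul1r. Qed.
Lemma BZl a x z : B (a *: x) z = a * B x z.
Proof. by rewrite -[a *: x]addr0 BL B0l addr0. Qed.
Lemma BNl x z : B (- x) z = - B x z.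
Proof. by rewrite -scaleN1r BZl mulN1r. Qed.
Lemma BBl x y z : B (x - y) z = B x z - B y z.
Proof. by rewrite BDl BNl. Qed.
Lemma BDr x y z : B z (x + y) = B z x + B z y.
Proof. by rewrite BC BDl !(BC z). Qed.
Lemma BZr a x z : B z (a *: x) = a * B z x.
Proof. by rewrite BC BZl (BC z). Qed.
Lemma BBr x y z : B z (x - y) = B z x - B z y.
Proof. by rewrite BC BBl !(BC z). Qed.
Lemma BNr x z : B z (- x) = - B z x.
Proof. by rewrite BC BNl BC. Qed.
Lemma Bsub a b : B (a - b) (a - b) = B a a - 2 * B a b + B b b.
Proof. rewrite BBl !BBr (BC b a). lra. Qed.
Lemma Badd a b : B (a + b) (a + b) = B a a + 2 * B a b + B b b.
Proof. rewrite BDl !BDr (BC b a). lra. Qed.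
Lemma Bhalf a : B (2^-1 *: a) (2^-1 *: a) = 4^-1 * B a a.
Proof. rewrite BZl BZr mulrA. congr (_ * _). by field. Qed.
End Gen.
Section HG.
Variables (R : realType) (H G : completeNormedModType R).
Variables (ipH : H -> H -> R) (ipG : G -> G -> R).
Hypotheses (hH : is_hilbert_inner ipH) (hG : is_hilbert_inner ipG).
Local Notation B := (pinner ipH ipG).
Local Notation pn := (pnorm ipH ipG).

Lemma pBC x y : B x y = B y x.
Proof. by case: hH => C1 _ _; case: hG => C2 _ _; rewrite /pinner C1 C2. Qed.
Lemma pBL a x y z : B (a *: x + y) z = a * B x z + B y z.
Proof.
case: hH => _ L1 _; case: hG => _ L2 _; rewrite /pinner /= L1 L2; lra.
Qed.
Definition qB0l := @B0l _ _ _ pBL.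
Definition qBDl := @BDl _ _ _ pBL.
Definition qBZl := @BZl _ _ _ pBL.
Definition qBNl := @BNl _ _ _ pBL.
Definition qBBl := @BBl _ _ _ pBL.
Definition qBDr := @BDr _ _ _ pBC pBL.
Definition qBZr := @BZr _ _ _ pBC pBL.
Definition qBNr := @BNr _ _ _ pBC pBL.
Definition qBBr := @BBr _ _ _ pBC pBL.
Definition qBsub := @Bsub _ _ _ pBC pBL.
Definition qBadd := @Badd _ _ _ pBC pBL.
Definition qBhalf := @Bhalf _ _ _ pBC pBL.
Ltac bexp := rewrite ?(qBDl, qBBl, qBZl, qBNl, qBDr, qBBr, qBZr, qBNr, qB0l).

Lemma pBsq v : B v v = `|v.1| ^+ 2 + `|v.2| ^+ 2.
Proof. by case: hH => _ _ N1; case: hG => _ _ N2; rewrite /pinner N1 N2. Qed.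
Lemma pBpos v : 0 <= B v v.
Proof. by rewrite pBsq addr_ge0 // sqr_ge0. Qed.
Lemma pBdef v : B v v = 0 -> v = 0.
Proof.
rewrite pBsq => h.
have h1 : `|v.1| ^+ 2 = 0 by apply/eqP; rewrite eq_le sqr_ge0 andbT; 
  rewrite -h lerDl sqr_ge0.
have h2 : `|v.2| ^+ 2 = 0 by apply/eqP; rewrite eq_le sqr_ge0 andbT; 
  rewrite -h lerDr sqr_ge0.
move/eqP: h1; rewrite expf_eq0 /= normr_eq0 => /eqP e1.
move/eqP: h2; rewrite expf_eq0 /= normr_eq0 => /eqP e2.
by clear h; case: v e1 e2 => a b /= -> ->.
Qed.
Lemma pn_sq v : pn v ^+ 2 = B v v.
Proof. by rewrite /pnorm sqr_sqrtr // pBpos. Qed.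
Lemma pn_le u v : (pn u <= pn v) = (B u u <= B v v).
Proof. by rewrite /pnorm ler_sqrt // pBpos. Qed.
Lemma pn_ge0 v : 0 <= pn v.
Proof. exact: sqrtr_ge0. Qed.

Lemma proj_char D x p : pconvex D -> is_proj ipH ipG D x p ->
  forall y, D y -> B (y - p) (x - p) <= 0.
Proof.
move=> cD [Dp minp] y Dy.
set c := B (y - p) (x - p); set qq := B (y - p) (y - p).
rewrite leNgt; apply/negP => c0.
have qq0 : 0 <= qq by apply: pBpos.
set t := c / (c + qq).
have cq0 : 0 < c + qq by lra.
have tq : t * (c + qq) = c by rewrite /t mulfVK // gt_eqF.
have t0 : 0 < t by rewrite /t divr_gt0.
have t1 : t <= 1 by rewrite /t ler_pdivrMr // mul1r; lra.
have Dz := cD y p t Dy Dp ltac:(apply/andP; split; lra).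
have := minp _ Dz; rewrite pn_le.
have -> : x - (t *: y + (1 - t) *: p) = (x - p) - t *: (y - p).
  by rewrite scalerBl scale1r scalerBr opprB !opprD !addrA opprK [x - _ - p]addrAC addrAC.
rewrite (qBsub (x - p) (t *: _)) qBZr qBZl qBZr.
rewrite (pBC (x - p)) -/c -/qq => h.
have h2 : 2 * t * c <= t * (t * qq) by lra.
have h3 : 2 * c <= t * qq by rewrite -(ler_pM2l t0) mulrA; lra.
nra.
Qed.

Lemma halfsp_convex a c : pconvex (halfsp ipH ipG a c).
Proof.
move=> u v t; rewrite /halfsp /= => hu hv /andP[t0 t1].
move: hu hv; bexp => hu hv.
have h1 := mulr_ge0_le0 t0 hu.
have h2 : 0 <= 1 - t by lra.
have h3 := mulr_ge0_le0 h2 hv.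
rewrite -[X in _ <= X](addr0 0); apply: le_trans (lerD h1 h3).
by rewrite le_eqVlt; apply/orP; left; apply/eqP; ring.
Qed.

Lemma pconvexI (A C : set (H * G)) : pconvex A -> pconvex C -> pconvex (A `&` C).
Proof. by move=> cA cC u v t [Au Cu] [Av Cv] ht; split; [apply: cA|apply: cC]. Qed.

Lemma proj_exists (Z : set (H * G)) x0 : Z !=set0 -> closed Z -> pconvex Z ->
  exists p, is_proj ipH ipG Z x0 p.
Proof.
move=> [z0 Zz0] cZ cvZ.
pose f z := B (x0 - z) (x0 - z).
pose S := [set f z | z in Z].
have lbS : has_lbound S by exists 0 => _ [z _ <-]; exact: pBpos.
have neS : S !=set0 by exists (f z0), z0.
pose d := inf S.
have dle z : Z z -> d <= f z by move=> Zz; apply: ge_inf => //; exists z.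
have ex k : exists z, Z z /\ f z < d + k.+1%:R^-1.
  have ek : 0 < k.+1%:R^-1 :> R by rewrite invr_gt0 ltr0n.
  have [e [z Zz <-] he] := inf_adherent ek (conj neS lbS).
  by exists z.
case: (choice ex) => zs hzs.
have par k m : B (zs k - zs m) (zs k - zs m) <= 2 * k.+1%:R^-1 + 2 * m.+1%:R^-1.
  have [Zk fk] := hzs k; have [Zm fm] := hzs m.
  have Zmid := cvZ _ _ (2^-1) Zk Zm ltac:(apply/andP; split; lra).
  have := dle _ Zmid; move: fk fm; rewrite /f; bexp.
  have s1 := pBC x0 (zs k); have s2 := pBC x0 (zs m); have s3 := pBC (zs k) (zs m).
  set ek := k.+1%:R^-1; set em := m.+1%:R^-1; set hf := (2:R)^-1.
  have hh : hf * 2 = 1 by rewrite mulVf.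
  move=> *; nra.
have eN (e : R) : 0 < e -> exists N : nat, forall k, (N <= k)%N ->
    forall m, (N <= m)%N -> B (zs k - zs m) (zs k - zs m) < e ^+ 2.
  move=> e0.
  have e2 : 0 < e ^+ 2 / 4 by rewrite divr_gt0 // exprn_gt0.
  have [N _ hN] := near_infty_natSinv_lt (PosNum e2).
  have hNN := hN N (leqnn N); rewrite /= in hNN.
  exists N => k hk m hm.
  have le1 (j : nat) : (N <= j)%N -> j.+1%:R^-1 <= N.+1%:R^-1 :> R.
    by move=> hj; rewrite lef_pV2 ?posrE ?ltr0n // ler_nat ltnS.
  have := par k m; have := le1 _ hk; have := le1 _ hm.
  move: hNN; set a := k.+1%:R^-1; set b := m.+1%:R^-1; set c := N.+1%:R^-1; set E := e ^+ 2; set X := B _ _; lra.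
have cau1 : cauchy ((fun k => (zs k).1) @ \oo).
  apply: cauchy_exP => e e0.
  have [N hN] := eN e e0.
  exists (zs N).1; exists N => // k /= hk.
  rewrite -ball_normE /ball_ /=.
  have h := hN N (leqnn N) k hk.
  have : `|(zs N).1 - (zs k).1| ^+ 2 < e ^+ 2.
    apply: le_lt_trans h; rewrite pBsq /= lerDl sqr_ge0 //.
  have := normr_ge0 ((zs N).1 - (zs k).1); nra.
have cau2 : cauchy ((fun k => (zs k).2) @ \oo).
  apply: cauchy_exP => e e0.
  have [N hN] := eN e e0.
  exists (zs N).2; exists N => // k /= hk.
  rewrite -ball_normE /ball_ /=.
  have h := hN N (leqnn N) k hk.
  have : `|(zs N).2 - (zs k).2| ^+ 2 < e ^+ 2.
    apply: le_lt_trans h; rewrite pBsq /= lerDr sqr_ge0 //.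
  have := normr_ge0 ((zs N).2 - (zs k).2); nra.
have c1 : cvg ((fun k => (zs k).1) @ \oo) by apply: cauchy_cvg.
have c2 : cvg ((fun k => (zs k).2) @ \oo) by apply: cauchy_cvg.
pose p1 := lim ((fun k => (zs k).1) @ \oo).
pose p2 := lim ((fun k => (zs k).2) @ \oo).
have {}c1 : (fun k => (zs k).1) @ \oo --> p1 := c1.
have {}c2 : (fun k => (zs k).2) @ \oo --> p2 := c2.
have cz : zs @ \oo --> (p1, p2).
  have -> : zs = (fun k => ((zs k).1, (zs k).2)).
    by apply: funext => k; case: (zs k).
  exact: cvg_pair.
have Zp : Z (p1, p2).
  apply: (closed_cvg _ cZ _ _ cz); exists 0%N => // n _ /=; by case: (hzs n).
have fcv : (fun k => f (zs k)) @ \oo --> f (p1, p2).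
  have -> : (fun k => f (zs k)) = (fun k => `|x0.1 - (zs k).1| * `|x0.1 - (zs k).1| + `|x0.2 - (zs k).2| * `|x0.2 - (zs k).2|).
    by apply: funext => k; rewrite /f pBsq /= !expr2.
  rewrite /f pBsq /= !expr2.
  apply: cvgD; apply: cvgM; apply: cvg_norm; apply: cvgB => //; exact: cvg_cst.
have gcv : (fun k => d + k.+1%:R^-1) @ \oo --> d + 0.
  apply: cvgD; first exact: cvg_cst.
  exact: cvg_harmonic.
have fp : f (p1, p2) <= d.
  rewrite -[d]addr0; apply: (ler_cvg_to fcv gcv).
  by exists 0%N => // n _ /=; case: (hzs n) => _ /ltW.
exists (p1, p2); split => // y Zy.
by rewrite pn_le; apply: le_trans fp (dle _ Zy).
Qed.

Lemma B0r z : B z 0 = 0.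
Proof. by rewrite pBC qB0l. Qed.

Lemma main_aux (Z : set (H * G)) (lam : nat -> R) (Hs Cs : nat -> set (H * G))
  (x xh : nat -> H * G) :
  Z !=set0 -> closed Z -> pconvex Z ->
  (forall n, 0 < lam n <= 1) ->
  (forall n, closed (Hs n) /\ pconvex (Hs n) /\ Z `<=` Hs n) ->
  (forall n, closed (Cs n) /\ pconvex (Cs n) /\
             Z `<=` Cs n /\ Cs n `<=` halfsp ipH ipG (x n) (xh n)) ->
  (forall n, xh n = x n + lam n *: (metric_proj ipH ipG (Hs n) (x n) - x n)) ->
  (forall n, x n.+1 =
     metric_proj ipH ipG (halfsp ipH ipG (x 0%N) (x n) `&` Cs n) (x 0%N)) ->
  let xbar := metric_proj ipH ipG Z (x 0%N) in
  let w := 2^-1 *: (x 0%N + xbar) in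
  let r := pnorm ipH ipG (w - x 0%N) in
  let b := fun n => 4 * r ^+ 2 - pnorm ipH ipG (x n - x 0%N) ^+ 2 in
  [/\ (forall n, pnorm ipH ipG (w - x n) <= 2^-1 * pnorm ipH ipG (x 0%N - xbar)),
      (forall n, 0 <= b n /\ pnorm ipH ipG (x n - xbar) ^+ 2 <= b n) &
      ((forall n, halfsp ipH ipG (x 0%N) (x n) (x n.+1)) ->
         (forall n, b n.+1 <= b n) /\
         (forall n, x n != x n.+1 ->
            pnorm ipH ipG (xbar - x n.+1) ^+ 2 <
              pnorm ipH ipG (x 0%N - xbar) ^+ 2 - pnorm ipH ipG (x 0%N - x n) ^+ 2
            /\ b n.+1 < b n))].
Proof.
move=> Zne cZ cvZ _ _ hC _ hx xbar w r b.
have [pZ hpZ] := @proj_exists Z (x 0%N) Zne cZ cvZ.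
have Pxbar : is_proj ipH ipG Z (x 0%N) xbar by apply: xgetI hpZ.
have Zxbar := Pxbar.1.
have key n : forall z, Z z -> B (z - x n) (x 0%N - x n) <= 0.
  elim: n => [|n IH] z Zz; first by rewrite subrr B0r.
  rewrite hx /metric_proj.
  set Q := halfsp ipH ipG (x 0%N) (x n) `&` Cs n.
  case: xgetP => [p _ Pp | NP]; last by rewrite subrr B0r.
  have [_ [cC [ZC _]]] := hC n.
  apply: (@proj_char Q (x 0%N) p _ Pp); first by apply: pconvexI => //; apply: halfsp_convex.
  by split; [exact: IH | exact: ZC].
set x0 := x 0%N.
have K n := key n xbar Zxbar.
have hf : (2:R)^-1 * 2 = 1 by rewrite mulVf.
have r2 : r ^+ 2 = B (w - x0) (w - x0) by rewrite /r pn_sq.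
have II n : 0 <= b n /\ pn (x n - xbar) ^+ 2 <= b n.
  have Kn := K n; have P := pBpos (x n - xbar).
  rewrite /b r2 !pn_sq; move: Kn P; rewrite /w; bexp.
  have := pBC x0 xbar; have := pBC x0 (x n); have := pBC xbar (x n).
  move=> *; split; nra.
have I n : pn (w - x n) <= 2^-1 * pn (x0 - xbar).
  have E : B (w - x n) (w - x n) <= 4^-1 * B (x0 - xbar) (x0 - xbar).
    have Kn := K n; move: Kn; rewrite /w; bexp.
    have := pBC x0 xbar; have := pBC x0 (x n); have := pBC xbar (x n).
    move=> *; nra.
  have := pn_sq (w - x n); have := pn_sq (x0 - xbar).
  have := pn_ge0 (w - x n); have := pn_ge0 (x0 - xbar).
  move: E; set al := pn (w - x n); set be := pn (x0 - xbar).
  move=> *; nra.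
split => // hs; split.
  move=> n; have P := pBpos (x n.+1 - x n); have h := hs n.
  rewrite /b !pn_sq; move: P h; rewrite /halfsp /=; bexp.
  have := pBC x0 (x n); have := pBC x0 (x n.+1); have := pBC (x n) (x n.+1).
  move=> *; lra.
move=> n hne.
have P : 0 < B (x n.+1 - x n) (x n.+1 - x n).
  rewrite lt_neqAle pBpos andbT; apply/eqP => /esym /pBdef /eqP.
  by rewrite subr_eq0 => /eqP e; rewrite e eqxx in hne.
have h := hs n; have Kn := K n.+1.
rewrite /b !pn_sq; move: P h Kn; rewrite /halfsp /=; bexp.
have := pBC x0 (x n); have := pBC x0 (x n.+1); have := pBC (x n) (x n.+1).
have := pBC x0 xbar; have := pBC xbar (x n); have := pBC xbar (x n.+1).
move=> *; split; lra.
Qed.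
End HG.
Theorem proposition12 (R : realType) (H G : completeNormedModType R)
  (ipH : H -> H -> R) (ipG : G -> G -> R)
  (hH : is_hilbert_inner ipH) (hG : is_hilbert_inner ipG)
  (Z : set (H * G)) (lam : nat -> R) (Hs Cs : nat -> set (H * G))
  (x xh : nat -> H * G) :
  Z !=set0 -> closed Z -> pconvex Z ->
  (forall n, 0 < lam n <= 1) ->
  (forall n, closed (Hs n) /\ pconvex (Hs n) /\ Z `<=` Hs n) ->
  (forall n, closed (Cs n) /\ pconvex (Cs n) /\
             Z `<=` Cs n /\ Cs n `<=` halfsp ipH ipG (x n) (xh n)) ->
  (forall n, xh n = x n + lam n *: (metric_proj ipH ipG (Hs n) (x n) - x n)) ->
  (forall n, x n.+1 =
     metric_proj ipH ipG (halfsp ipH ipG (x 0%N) (x n) `&` Cs n) (x 0%N)) ->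
  let xbar := metric_proj ipH ipG Z (x 0%N) in
  let w := 2^-1 *: (x 0%N + xbar) in
  let r := pnorm ipH ipG (w - x 0%N) in
  let b := fun n => 4 * r ^+ 2 - pnorm ipH ipG (x n - x 0%N) ^+ 2 in
  [/\ (forall n, pnorm ipH ipG (w - x n) <= 2^-1 * pnorm ipH ipG (x 0%N - xbar)),
      (forall n, 0 <= b n /\ pnorm ipH ipG (x n - xbar) ^+ 2 <= b n) &
      ((forall n, halfsp ipH ipG (x 0%N) (x n) (x n.+1)) ->
         (forall n, b n.+1 <= b n) /\
         (forall n, x n != x n.+1 ->
            pnorm ipH ipG (xbar - x n.+1) ^+ 2 <
              pnorm ipH ipG (x 0%N - xbar) ^+ 2 - pnorm ipH ipG (x 0%N - x n) ^+ 2
            /\ b n.+1 < b n))].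
Proof. exact: (@main_aux R H G ipH ipG hH hG Z lam Hs Cs x xh). Qed.
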